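(* For all $p,s\in\mathbb{N}_0$ and all $x\in[0,1]$, $$1\le\frac{\prod_{i=0}^{p+s-1}(1+xi)}{\Big(\prod_{j=0}^{p-1}(1+xj)\Big)\Big(\prod_{k=0}^{s-1}(1+xk)\Big)}\le1+x\,2^{p+s}.$$
   Context: Empty products equal $1$. *)

(* Defs.v *)
From mathcomp Require Import all_boot all_order all_algebra.
Set Implicit Arguments. Unset Strict Implicit. Unset Printing Implicit Defensive.

(* Main.v *)
Require Import Defs.
From mathcomp Require Import all_boot all_order all_algebra.
From mathcomp Require Import ring lra zify.
Import Order.TTheory GRing.Theory Num.Theory.
Local Open Scope ring_scope.

Section Aux.
Variable R : realFieldType.
Variable x : R.
Hypothesis x0 : 0 <= x.
Hypothesis x1 : x <= 1.

Definition PP (n : nat) : R := \prod_(i < n) (1 + x * i%:R).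
Definition rr (p s : nat) : R := PP (p + s) / (PP p * PP s).

Lemma fac_gt0 (i : nat) : 0 < 1 + x * i%:R.
Proof. have : 0 <= x * i%:R by rewrite mulr_ge0. lra. Qed.

Lemma PP_gt0 n : 0 < PP n.
Proof. rewrite /PP; apply: prodr_gt0 => i _; exact: fac_gt0. Qed.

Lemma PPS n : PP n.+1 = PP n * (1 + x * n%:R).
Proof. by rewrite /PP big_ord_recr. Qed.

Lemma rr0s s : rr 0 s = 1.
Proof.
rewrite /rr add0n /PP big_ord0 mul1r divff //.
exact: lt0r_neq0 (PP_gt0 s).
Qed.

Lemma rrp0 p : rr p 0 = 1.
Proof.
rewrite /rr addn0 /PP big_ord0 mulr1 divff //.
exact: lt0r_neq0 (PP_gt0 p).
Qed.

Lemma rr_rec a b : rr a.+1 b.+1 =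
  rr a b.+1 + (x * b.+1%:R / (1 + x * b%:R)) * rr a.+1 b.
Proof.
rewrite /rr addSn addnS !PPS.
have h1 := PP_gt0 (a + b).+1.
have h2 := PP_gt0 (a + b).
have h3 := PP_gt0 a.
have h4 := PP_gt0 b.
have h5 := fac_gt0 a.
have h6 := fac_gt0 b.

rewrite -!natr1.
field.
by rewrite !lt0r_neq0.
Qed.

Lemma pow_ge (n : nat) : (n.+1)%:R <= (2 : R) ^+ n.
Proof.
rewrite -natrX ler_nat; elim: n => // n IH.
rewrite expnS; lia.
Qed.

Lemma main p s : 1 <= rr p s /\ rr p s + x * (p + s).+1%:R <= 1 + x * 2 ^+ (p + s).
Proof.
elim: p s => [|a IHa] s.
  rewrite rr0s add0n; split => //.
  have := ler_wpM2l x0 (pow_ge s). lra.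
elim: s => [|b IHb].
  rewrite rrp0 addn0; split => //.
  have := ler_wpM2l x0 (pow_ge a.+1). lra.
rewrite rr_rec.
have [l1 u1] := IHa b.+1.
have [l2 u2] := IHb.
set c := x * b.+1%:R / (1 + x * b%:R).
have hb := fac_gt0 b.
have c0 : 0 <= c by rewrite /c divr_ge0 // ?mulr_ge0 // ltW.
have c1 : c <= 1.
  by rewrite /c ler_pdivrMr // mul1r -natr1 mulrDr mulr1 addrC lerD2r.
have c2 : c <= x * b.+1%:R.
  rewrite /c ler_pdivrMr //.
  have : 0 <= x * b.+1%:R * (x * b%:R) by rewrite !mulr_ge0.
  rewrite mulrDr mulr1; lra.
have hc : c * (rr a.+1 b - 1) <= rr a.+1 b - 1 by apply: ler_piMl; rewrite // subr_ge0.
have e : c * rr a.+1 b = c * (rr a.+1 b - 1) + c by ring.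
move: u1 u2; rewrite !addSn !addnS !exprS.
set T := (2 : R) ^+ (a + b).
have ha : 0 <= x * a%:R by rewrite mulr_ge0.
have E1 : x * (a + b).+2%:R = x * a%:R + x * b%:R + 2 * x.
  by rewrite -addn2 !natrD; ring.
have E2 : x * (a + b).+3%:R = x * a%:R + x * b%:R + 3 * x.
  by rewrite -addn3 !natrD; ring.
have E3 : x * b.+1%:R = x * b%:R + x.
  by rewrite -addn1 !natrD; ring.
rewrite E1 E2; rewrite E3 in c2.
have hc0 : 0 <= c * (rr a.+1 b - 1) by rewrite mulr_ge0 // subr_ge0.
have E4 : x * (2 * (2 * T)) = 4 * (x * T) by ring.
have E5 : x * (2 * T) = 2 * (x * T) by ring.
rewrite E4 E5.
move=> u1 u2; split; first lra.
lra.
Qed.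

End Aux.

Theorem lemma4p3 (R : realFieldType) (p s : nat) (x : R) :
  0 <= x <= 1 ->
  let q := (\prod_(i < p + s) (1 + x * i%:R)) /
           ((\prod_(j < p) (1 + x * j%:R)) * (\prod_(k < s) (1 + x * k%:R))) in
  1 <= q <= 1 + x * 2 ^+ (p + s).
Proof.
move=> /andP [x0 x1]; cbv zeta.
have [l u] := @main R x x0 x1 p s.
have h : 0 <= x * (p + s).+1%:R by rewrite mulr_ge0.
move: l u h; rewrite /rr /PP.
set Q := (_ / _).
move=> l u h; apply/andP; split => //; lra.
Qed.
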